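(* Let $n\in\mathbb{N}$, $\varkappa\in\mathbb{N}^n$, $N=|\varkappa|$, $m\in\mathbb{N}_0$, and let $y_1,\ldots,y_n$ be indeterminates (or pairwise distinct elements of a field). Then \[ \hom_m\bigl(y^{[\varkappa]}\bigr)=\frac{\det G_{(m)}(y,\varkappa)}{\det G_\emptyset(y,\varkappa)}, \] where $(m)$ is the one-part partition (and $(0)=\emptyset$).
   Context: $\mathbb{N}=\{1,2,\ldots\}$, $\mathbb{N}_0=\{0,1,2,\ldots\}$. $\hom_m(x_1,\ldots,x_N)=\sum_{k\in\mathbb{N}_0^N,\,|k|=m}x_1^{k_1}\cdots x_N^{k_N}$ is the complete homogeneous symmetric polynomial. For $\varkappa\in\mathbb{N}^n$, $y^{[\varkappa]}$ denotes the list of length $|\varkappa|$ in which $y_1$ is repeated $\varkappa_1$ times, then $y_2$ repeated $\varkappa_2$ times, etc. Partitions are extended by zeros to length $N$. Each $p\in\{1,\ldots,N\}$ is written uniquely as $p=\varkappa_1+\cdots+\varkappa_{q-1}+r$ with $1\le q\le n$, $1\le r\le\varkappa_q$. For a partition $\lambda$ of length $\le N$, $G_\lambda(y,\varkappa)$ is the $N\times N$ matrix with entries $G_\lambda(y,\varkappa)_{j,p}=\binom{N+\lambda_j-j}{r-1}y_q^{N+\lambda_j-j-r+1}$ if $N+\lambda_j-j-r+1\ge0$ and $0$ otherwise. *)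

(* Defs.v *)
From HB Require Import structures.
From mathcomp Require Import all_boot all_order all_algebra.
Set Implicit Arguments. Unset Strict Implicit. Unset Printing Implicit Defensive.
Import Order.TTheory GRing.Theory Num.Theory.
Local Open Scope ring_scope.

Section Defs.
Variable F : fieldType.

(* complete homogeneous symmetric polynomial h_m evaluated at the list s:
   sum over k in N_0^{size s} with |k| = m of prod_i s_i^{k_i}
   (each k_i <= m, so k ranges over functions into 'I_m.+1). *)
Definition hcomplete (m : nat) (s : seq F) : F :=
  \sum_(k : {ffun 'I_(size s) -> 'I_m.+1} | (\sum_(i < size s) (k i : nat) == m)%N)
     \prod_(i < size s) s`_i ^+ (k i : nat).

Variables (n : nat) (kappa : 'I_n -> nat) (y : 'I_n -> F).

Definition Nk : nat := (\sum_(i < n) kappa i)%N.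

Definition yrep : seq F := flatten [seq nseq (kappa i) (y i) | i <- enum 'I_n].

(* for the 0-indexed column p (i.e. column p+1), the pair (y_q, r) where
   p+1 = kappa_1 + ... + kappa_{q-1} + r with 1 <= r <= kappa_q *)
Definition colinfo : seq (F * nat) :=
  flatten [seq [seq (y i, r) | r <- iota 1 (kappa i)] | i <- enum 'I_n].

(* partitions are given as seq nat, extended by zeros; lam_j = nth 0 lam (j-1) *)
Definition Gmx (lam : seq nat) : 'M[F]_Nk :=
  \matrix_(j < Nk, p < Nk)
    let yq := (nth (0, 1%N) colinfo p).1 in
    let r := (nth (0, 1%N) colinfo p).2 in
    let e := (Nk + nth 0%N lam j - j.+1)%N in   (* N + lam_j - j, with j 1-indexed *)
    if (r.-1 <= e)%N then ('C(e, r.-1))%:R * yq ^+ (e - r.-1) else 0.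

End Defs.

(* Main.v *)
Require Import Defs.
From HB Require Import structures.
From mathcomp Require Import all_boot all_order all_algebra.
From mathcomp Require Import ring zify.
Set Implicit Arguments. Unset Strict Implicit. Unset Printing Implicit Defensive.
Import GRing.Theory.
Local Open Scope ring_scope.

Section H.
Variable F : fieldType.

Definition Tp (m : nat) (a : F) : {poly F} := \poly_(j < m.+1) (a ^+ j).

Lemma hcomplete_coef m (s : seq F) :
  hcomplete m s = (\prod_(i < size s) Tp m s`_i)`_m.
Proof.
rewrite /hcomplete.
have -> : \prod_(i < size s) Tp m s`_i =
   \prod_(i < size s) \sum_(j : 'I_m.+1) (s`_i ^+ j)%:P * 'X^j.
  by apply: eq_bigr => i _; rewrite /Tp poly_def; apply: eq_bigr => j _; rewrite mul_polyC.
rewrite bigA_distr_bigA coef_sum big_mkcond /=; apply: eq_bigr => k _.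
rewrite big_split /= -rmorph_prod prodrXr coefCM coefXn.
by rewrite eq_sym; case: eqP; rewrite ?mulr1 ?mulr0.
Qed.


Lemma prod_agree (I : Type) (r : seq I) (A B : I -> {poly F}) k :
  (forall i j, (j <= k)%N -> (A i)`_j = (B i)`_j) ->
  forall j, (j <= k)%N -> (\prod_(i <- r) A i)`_j = (\prod_(i <- r) B i)`_j.
Proof.
move=> hAB; elim: r => [|x r IH] j hj; first by rewrite !big_nil.
rewrite !big_cons !coefM; apply: eq_bigr => i _.
have hi : (i <= k)%N by apply: leq_trans hj; rewrite -ltnS.
rewrite hAB // IH //; apply: leq_trans hj; exact: leq_subr.
Qed.

Lemma hcomplete_nil m : hcomplete m ([::] : seq F) = (m == 0)%:R.
Proof. by rewrite hcomplete_coef big_ord0 coef1. Qed.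

Lemma hcomplete_cons m (a : F) (s : seq F) :
  hcomplete m (a :: s) = \sum_(i < m.+1) a ^+ i * hcomplete (m - i) s.
Proof.
rewrite hcomplete_coef /= big_ord_recl coefM; apply: eq_bigr => i _.
rewrite /Tp coef_poly ltn_ord hcomplete_coef; congr (_ * _).
apply: (@prod_agree _ _ _ _ (m - i)) => // j l hl.
rewrite /Tp !coef_poly lift0 /= !ltnS hl.
by rewrite (leq_trans hl (leq_subr i m)).
Qed.


Lemma hcomplete_rec m (a : F) (s : seq F) :
  hcomplete m.+1 (a :: s) = a * hcomplete m (a :: s) + hcomplete m.+1 s.
Proof.
rewrite !hcomplete_cons big_ord_recl /= expr0 mul1r subn0 addrC; congr (_ + _).
rewrite mulr_sumr; apply: eq_bigr => i _.
by rewrite /bump /= add1n subSS exprS mulrA.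
Qed.

Lemma hcomplete0 (s : seq F) : hcomplete 0 s = 1.
Proof.
elim: s => [|a s IH]; first by rewrite hcomplete_nil.
by rewrite hcomplete_cons big_ord1 expr0 mul1r.
Qed.

Lemma hcomplete1 m (a : F) : hcomplete m [:: a] = a ^+ m.
Proof.
rewrite hcomplete_cons (bigD1 ord_max) //= subnn hcomplete_nil mulr1 big1 ?addr0 //.
move=> i hi; rewrite hcomplete_nil subn_eq0 leqNgt.
have -> : (i < m)%N by rewrite ltn_neqAle -ltnS ltn_ord andbT; apply: contra hi => /eqP h; apply/eqP/val_inj.
by rewrite mulr0.
Qed.


Definition Pp (s : seq F) : {poly F} := \prod_(x <- s) ('X - x%:P).

Lemma key (s : seq F) : s != [::] -> forall m, exists Q R,
  'X^((size s).-1 + m) = hcomplete m s *: 'X^((size s).-1) + R + Pp s * Q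
  /\ (size R <= (size s).-1)%N.
Proof.
elim: s => [//|a s' IH] _.
case: s' IH => [|b s''] IH m.
  have : root ('X^m - (a ^+ m)%:P) a by rewrite rootE !hornerE subrr.
  case/factor_theorem => q hq; exists q, 0; split; last by rewrite size_poly0.
  rewrite /= hcomplete1 expr0 -mul_polyC mulr1 addr0 /Pp big_cons big_nil mulr1 mulrC -hq.
  by rewrite add0n addrC subrK.
have {}IH := IH isT.
rewrite /= in IH *.
elim: m => [|m [Q [R [E sz]]]].
  exists 0, 0; split; last by rewrite size_poly0.
  by rewrite hcomplete0 scale1r addn0 addr0 mulr0 addr0.
have [Q' [R' [E' sz']]] := IH m.+1.
exists (a *: Q + Q'), (a *: R - (a * hcomplete m.+1 (b :: s'')) *: 'X^(size s'') + ('X - a%:P) * R').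
split.
  have e1 : 'X^((size s'').+1 + m.+1) = a *: 'X^((size s'').+1 + m) + ('X - a%:P) * 'X^(size s'' + m.+1).
    have -> : (size s'' + m.+1 = (size s'').+1 + m)%N by rewrite addnS.
    rewrite addnS exprS -mul_polyC; ring.
  rewrite e1 E E' (hcomplete_rec m a) /Pp big_cons -/(Pp _) -!mul_polyC polyCD !polyCM exprS.
  ring.
apply: (leq_trans (size_add _ _)); rewrite geq_max; apply/andP; split.
  apply: (leq_trans (size_add _ _)); rewrite geq_max; apply/andP; split.
    exact: leq_trans (size_scale_leq _ _) sz.
  by rewrite size_polyN (leq_trans (size_scale_leq _ _)) // size_polyXn.
by apply: (leq_trans (size_mul_leq _ _)); rewrite size_XsubC.
Qed.


Definition Lf (a : F) (k : nat) (f : {poly F}) : F := (f \Po ('X + a%:P))`_k.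

Lemma Lf_sum (I : Type) (r : seq I) (P : pred I) (c : I -> F) (g : I -> {poly F}) a k :
  Lf a k (\sum_(i <- r | P i) c i *: g i) = \sum_(i <- r | P i) c i * Lf a k (g i).
Proof.
rewrite /Lf linear_sum coef_sum; apply: eq_bigr => i _.
by rewrite linearZ coefZ.
Qed.

Lemma LfD a k f g : Lf a k (f + g) = Lf a k f + Lf a k g.
Proof. by rewrite /Lf comp_polyD coefD. Qed.

Lemma Lf_Xn a k e :
  Lf a k 'X^e = if (k <= e)%N then 'C(e, k)%:R * a ^+ (e - k) else 0.
Proof.
rewrite /Lf rmorphXn /= comp_polyX addrC exprDn coef_sum.
under eq_bigr => i _ do rewrite coefMn -rmorphXn coefCM coefXn.
case: ifP => hk.
  have hk' : (k < e.+1)%N by rewrite ltnS.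
  rewrite (bigD1 (Ordinal hk')) //= eqxx mulr1 big1 ?addr0 ?mulr_natl //.
  move=> i hi; rewrite eq_sym.
  have -> : (i == k :> nat) = false by apply/negbTE; apply: contra hi => /eqP h; apply/eqP/val_inj.
  by rewrite mulr0 mul0rn.
rewrite big1 // => i _.
have -> : (k == i :> nat) = false.
  by apply/negbTE/eqP => h; move: (ltn_ord i); rewrite -h ltnS hk.
by rewrite mulr0 mul0rn.
Qed.

Lemma Lf_dvd a k kap g : (k < kap)%N -> Lf a k (('X - a%:P) ^+ kap * g) = 0.
Proof.
move=> hk; rewrite /Lf rmorphM rmorphXn rmorphB /= comp_polyX comp_polyC addrK.
by rewrite coefXnM hk.
Qed.

Lemma Lf_dvdP a kap f : (forall k, (k < kap)%N -> Lf a k f = 0) -> ('X - a%:P) ^+ kap %| f.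
Proof.
move=> H; set h := f \Po ('X + a%:P).
have ht : take_poly kap h = 0.
  by apply/polyP => i; rewrite coef_take_poly coef0; case: ifP => // /H.
rewrite -(comp_polyXaddC_K f a) -/h -(poly_take_drop kap h) ht add0r rmorphM rmorphXn /= comp_polyX.
exact: dvdp_mull (dvdpp _).
Qed.


Section C.
Variables (n : nat) (kappa : 'I_n -> nat) (y : 'I_n -> F).

Lemma size_colinfo : size (colinfo kappa y) = Nk kappa.
Proof.
rewrite /colinfo size_flatten /shape -map_comp sumnE big_map big_enum /=.
by apply: eq_bigr => i _; rewrite /= size_map size_iota.
Qed.

Lemma size_yrep : size (yrep kappa y) = Nk kappa.
Proof.
rewrite /yrep size_flatten /shape -map_comp sumnE big_map big_enum /=.
by apply: eq_bigr => i _; rewrite /= size_nseq.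
Qed.

Lemma Pp_yrep : Pp (yrep kappa y) = \prod_(i < n) ('X - (y i)%:P) ^+ kappa i.
Proof.
rewrite /Pp /yrep big_flatten big_map big_enum /=; apply: eq_bigr => i _.
by rewrite big_nseq; elim: (kappa i) => [|k IH] //=; rewrite IH exprS.
Qed.

Lemma colinfo_nth p : (p < Nk kappa)%N ->
  exists q : 'I_n, exists r, nth (0, 1%N) (colinfo kappa y) p = (y q, r.+1) /\ (r < kappa q)%N.
Proof.
rewrite -size_colinfo => /(mem_nth (0, 1%N)) /flattenP [t /mapP [q _ ->]] /mapP [r].
rewrite mem_iota => /andP [h1 h2] ->; exists q, r.-1.
by rewrite prednK // -ltnS -(addn1 (kappa q)) addnC.
Qed.

Lemma colinfo_mem (q : 'I_n) r : (r < kappa q)%N ->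
  exists p : 'I_(Nk kappa), nth (0, 1%N) (colinfo kappa y) p = (y q, r.+1).
Proof.
move=> hr.
have hin : (y q, r.+1) \in colinfo kappa y.
  apply/flattenP; exists [seq (y q, r0) | r0 <- iota 1 (kappa q)].
    by apply: map_f; rewrite mem_enum.
  by apply: map_f; rewrite mem_iota /= add1n ltnS.
have hp : (index (y q, r.+1) (colinfo kappa y) < Nk kappa)%N by rewrite -size_colinfo index_mem.
by exists (Ordinal hp); rewrite /= nth_index.
Qed.


Lemma prod_dvd (s : seq 'I_n) f : injective y -> uniq s ->
  (forall q, q \in s -> ('X - (y q)%:P) ^+ kappa q %| f) ->
  \prod_(q <- s) ('X - (y q)%:P) ^+ kappa q %| f.
Proof.
move=> iy; elim: s => [|q s IH] /=; first by rewrite big_nil dvd1p.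
case/andP=> qs us H; rewrite big_cons Gauss_dvdp; last first.
  apply: coprimep_expl; rewrite coprimep_sym coprimep_XsubC rootE horner_prod.
  rewrite prodf_seq_neq0; apply/allP => i hi /=.
  rewrite horner_exp hornerXsubC expf_neq0 // subr_eq0.
  by apply: contra qs => /eqP /iy ->.
rewrite H ?mem_head // IH // => i hi; apply: H; rewrite in_cons hi orbT.
by [].
Qed.


Definition Lp (p : nat) (f : {poly F}) : F :=
  Lf (nth (0, 1%N) (colinfo kappa y) p).1 (nth (0, 1%N) (colinfo kappa y) p).2.-1 f.

Lemma Gentry lam (j p : 'I_(Nk kappa)) :
  Gmx kappa y lam j p = Lp p ('X^(Nk kappa + nth 0%N lam j - j.+1)).
Proof. by rewrite /Gmx mxE /Lp Lf_Xn. Qed.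

Lemma LpD p f g : Lp p (f + g) = Lp p f + Lp p g.
Proof. exact: LfD. Qed.

Lemma LpP p Q : (p < Nk kappa)%N -> Lp p (Pp (yrep kappa y) * Q) = 0.
Proof.
case/colinfo_nth => q [r [hq hr]].
by rewrite /Lp hq /= Pp_yrep (bigD1 q) //= -mulrA Lf_dvd.
Qed.

Lemma det_nz : injective y -> \det (Gmx kappa y [::]) != 0.
Proof.
move=> iy; apply/negP => /det0P [v vn0 hv].
set N := Nk kappa.
set f := \sum_(j < N) v 0 j *: 'X^(N - j.+1).
have hL : forall p : 'I_N, Lp p f = 0.
  move=> p; have := congr1 (fun M : 'M[F]_(1, N) => M 0 p) hv; rewrite !mxE => <-.
  rewrite /Lp Lf_sum; apply: eq_bigr => j _; rewrite Gentry /= nth_nil addn0 //. 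
have hdiv : Pp (yrep kappa y) %| f.
  rewrite Pp_yrep; apply: prod_dvd => //; first exact: index_enum_uniq.
  move=> q _; apply: Lf_dvdP => k hk; have [p hp] := colinfo_mem hk.
  by have := hL p; rewrite /Lp hp.
have szf : (size f <= N)%N.
  rewrite /f; apply: (big_ind (fun g : {poly F} => (size g <= N)%N)).
  - by rewrite size_poly0.
  - by move=> g h hg hh; apply: (leq_trans (size_add _ _)); rewrite geq_max hg hh.
  move=> j _; apply: (leq_trans (size_scale_leq _ _)); rewrite size_polyXn.
  by have := ltn_ord j; lia.
have f0 : f = 0.
  apply/eqP; apply/negP => /negP fn0.
  have := dvdp_leq fn0 hdiv; rewrite /Pp size_prod_XsubC size_yrep.
  by move=> h; move: (leq_trans h szf); rewrite ltnn.
apply: (negP vn0); apply/eqP/matrixP => i j; rewrite ord1 mxE.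
have := congr1 (fun g : {poly F} => g`_(N - j.+1)) f0.
rewrite coef0 coef_sum (bigD1 j) //= coefZ coefXn eqxx mulr1 big1 ?addr0 // => k hk.
rewrite coefZ coefXn.
have -> : (N - j.+1 == N - k.+1)%N = false.
  apply/negbTE/eqP => h; move/eqP: hk; apply; apply/val_inj => /=.
  by have := ltn_ord j; have := ltn_ord k; lia.
by rewrite mulr0.
Qed.


Lemma prod_if0 (N : nat) (c : F) : (0 < N)%N ->
  \prod_(i < N) (if (i == 0 :> nat) then c else 1) = c.
Proof.
case: N => [//|N] _; rewrite big_ord_recl /= big1 ?mulr1 // => i _ //.
Qed.

Lemma det_main m : (0 < Nk kappa)%N ->
  \det (Gmx kappa y [:: m]) = hcomplete m (yrep kappa y) * \det (Gmx kappa y [::]).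
Proof.
move=> N0; set N := Nk kappa.
have ne : yrep kappa y != [::] by rewrite -size_eq0 size_yrep -lt0n.
have [Q [R [E sz]]] := key ne m.
rewrite size_yrep -/N in E sz.
set h := hcomplete m (yrep kappa y) in E *.
set S := h *: 'X^(N.-1) + R.
have hS : forall p : 'I_N, Lp p S = Lp p 'X^(N.-1 + m).
  by move=> p; rewrite E [RHS]LpD LpP // addr0.
have szS : (size S <= N)%N.
  apply: (leq_trans (size_add _ _)); rewrite geq_max; apply/andP; split.
    by apply: (leq_trans (size_scale_leq _ _)); rewrite size_polyXn prednK.
  exact: leq_trans sz (leq_pred _).
have Sdef : S = \sum_(k < N) S`_(N - k.+1) *: 'X^(N - k.+1).
  apply/polyP => i; rewrite coef_sum.
  case: (ltnP i N) => hi.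
    have hk : (N - i.+1 < N)%N by lia.
    rewrite (bigD1 (Ordinal hk)) //= coefZ coefXn.
    have -> : (N - (N - i.+1).+1 = i)%N by lia.
    rewrite eqxx mulr1 big1 ?addr0 // => k hk'; rewrite coefZ coefXn.
    have -> : (i == N - k.+1)%N = false.
      apply/negbTE/eqP => e; move/eqP: hk'; apply; apply/val_inj => /=.
      by have := ltn_ord k; lia.
    by rewrite mulr0.
  rewrite nth_default ?(leq_trans szS) // big1 // => k _; rewrite coefZ coefXn.
  have -> : (i == N - k.+1)%N = false by apply/negbTE/eqP => e; lia.
  by rewrite mulr0.
set Emx := \matrix_(i < N, k < N) if (i == 0 :> nat) then S`_(N - k.+1) else (i == k)%:R.
have hmul : Gmx kappa y [:: m] = Emx *m Gmx kappa y [::].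
  apply/matrixP => i p; rewrite [in RHS]mxE.
  case: (eqVneq (i : nat) 0) => hi.
    under eq_bigr => k _ do rewrite mxE hi eqxx Gentry /= nth_nil addn0.
    rewrite Gentry hi /=.
    rewrite (_ : (_ + m - _ = N.-1 + m)%N); last by rewrite -/N; lia.
    by rewrite -hS {1}Sdef /Lp Lf_sum.
  under eq_bigr => k _ do rewrite mxE (negbTE hi).
  rewrite (bigD1 i) //= eqxx mul1r big1 ?addr0.
    rewrite !Gentry; congr (Lp _ 'X^(_ + _ - _)).
    by case: i hi => [[|i'] ?] //= _; rewrite nth_nil.
  move=> k hk; rewrite eq_sym.
  by rewrite (negbTE hk) mul0r.
rewrite hmul det_mulmx; congr (_ * _).
rewrite -det_tr det_trig; last first.
  apply/is_trig_mxP => i j hij; rewrite !mxE.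
  have -> : (j == 0 :> nat) = false by apply/negbTE; rewrite -lt0n (leq_ltn_trans _ hij).
  by rewrite (_ : (j == i) = false) //; apply/negbTE; rewrite neq_ltn hij orbT.
rewrite -(prod_if0 h N0); apply: eq_bigr => i _; rewrite !mxE eqxx.
case: eqP => // ->; rewrite subn1 /S coefD coefZ coefXn eqxx mulr1.
by rewrite nth_default ?addr0.
Qed.

End C.
End H.

Theorem corollary2 (F : fieldType) (n : nat) (kappa : 'I_n -> nat) (y : 'I_n -> F)
    (m : nat) :
  (0 < n)%N -> (forall i, (0 < kappa i)%N) -> injective y ->
  hcomplete m (yrep kappa y) = \det (Gmx kappa y [:: m%N]) / \det (Gmx kappa y [::]).
Proof.
move=> n0 k0 iy.
have N0 : (0 < Nk kappa)%N.
  rewrite /Nk (bigD1 (Ordinal n0)) //=; exact: leq_trans (k0 _) (leq_addr _ _).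
by rewrite det_main // mulfK // det_nz.
Qed.
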